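(* Let $(X,Y,\phi)$ be an $L$-context and $X'\subseteq X$. The following are equivalent: (i) $X\setminus X'$ is $\phi$-reducible in RST, i.e. for every $\mu\in L^X$ there is $\mu'\in L^{X'}$ with $\phi^\exists\mu=(\phi_{X',Y})^\exists\mu'$; (ii) $\phi^\exists\mu=(\phi_{X',Y})^\exists\big((\phi^\forall\phi^\exists\mu)_{X'}\big)$ for all $\mu\in L^X$; (iii) $\phi^\exists\phi^\forall=(\phi_{X',Y})^\exists(\phi_{X',Y})^\forall$ as maps $L^Y\to L^Y$; (iv) the map $\mathcal{K}\phi_{X',Y}\to\mathcal{K}\phi$, $\mu'\mapsto\phi^\forall\phi^\exists\underline{\mu'}$, is surjective (and hence an isomorphism of complete $L$-lattices).
   Context: $L=(L,* )$ is a complete residuated lattice: a complete lattice with bottom $0$ and top $1$, equipped with a commutative associative operation $*$ with unit $1$ satisfying $a*\bigvee_i b_i=\bigvee_i a*b_i$; $\to$ is its residuum ($a*b\le c\iff a\le b\to c$). An $L$-context is a triple $(X,Y,\phi)$ with $X,Y$ sets and $\phi\colon X\times Y\to L$. $L^X$ is the set of maps $X\to L$ with $L$-order $L^X(\mu,\mu')=\bigwedge_{x}(\mu(x)\to\mu'(x))$. $(\phi^\exists\mu)(y)=\bigvee_{x\in X}\mu(x)*\phi(x,y)$, $(\phi^\forall\lambda)(x)=\bigwedge_{y\in Y}(\phi(x,y)\to\lambda(y))$. $\mathcal{K}\phi=\{\mu\in L^X\mid\phi^\forall\phi^\exists\mu=\mu\}$ with the inherited $L$-order. $\phi_{X',Y}$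 is the restriction of $\phi$ to $X'\times Y$; $\mu_{X'}$ the restriction of $\mu\in L^X$ to $X'$; $\underline{\mu'}\in L^X$ the extension of $\mu'\in L^{X'}$ by $0$ outside $X'$. An isomorphism of complete $L$-lattices is an $L$-isometric bijection. *)

(* Defs.v *)
From Stdlib Require Import Classical ClassicalEpsilon FunctionalExtensionality.

Set Implicit Arguments.

Record CRL := {
  car :> Type;
  le : car -> car -> Prop;
  sup : (car -> Prop) -> car;
  inf : (car -> Prop) -> car;
  zero : car;
  one : car;
  mul : car -> car -> car;
  res : car -> car -> car;
  le_refl : forall a, le a a;
  le_trans : forall a b c, le a b -> le b c -> le a c;
  le_antisym : forall a b, le a b -> le b a -> a = b;
  sup_ub : forall (S : car -> Prop) a, S a -> le a (sup S);
  sup_least : forall (S : car -> Prop) b, (forall a, S a -> le a b) -> le (sup S) b;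
  inf_lb : forall (S : car -> Prop) a, S a -> le (inf S) a;
  inf_greatest : forall (S : car -> Prop) b, (forall a, S a -> le b a) -> le b (inf S);
  zero_le : forall a, le zero a;
  le_one : forall a, le a one;
  mulC : forall a b, mul a b = mul b a;
  mulA : forall a b c, mul a (mul b c) = mul (mul a b) c;
  mul1 : forall a, mul one a = a;
  mul_sup : forall a (S : car -> Prop),
      mul a (sup S) = sup (fun c => exists b, S b /\ c = mul a b);
  res_adj : forall a b c, le (mul a b) c <-> le a (res b c)
}.

Arguments le {_}. Arguments sup {_}. Arguments inf {_}. Arguments zero {_}.
Arguments one {_}. Arguments mul {_}. Arguments res {_}.

Definition supf {L : CRL} {I : Type} (f : I -> L) : L :=
  sup (fun a => exists i, a = f i).
Definition inff {L : CRL} {I : Type} (f : I -> L) : L :=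
  inf (fun a => exists i, a = f i).

Definition phiE {L : CRL} {X Y : Type} (phi : X -> Y -> L) (mu : X -> L) : Y -> L :=
  fun y => supf (fun x => mul (mu x) (phi x y)).
Definition phiA {L : CRL} {X Y : Type} (phi : X -> Y -> L) (lam : Y -> L) : X -> L :=
  fun x => inff (fun y => res (phi x y) (lam y)).

Definition restrCtx {L : CRL} {X Y : Type} (phi : X -> Y -> L) (X' : X -> Prop)
  : {x | X' x} -> Y -> L := fun x y => phi (proj1_sig x) y.
Definition restrFun {L : CRL} {X : Type} (mu : X -> L) (X' : X -> Prop)
  : {x | X' x} -> L := fun x => mu (proj1_sig x).
Definition extZero {L : CRL} {X : Type} {X' : X -> Prop} (mu' : {x | X' x} -> L)
  : X -> L := fun x =>
  match excluded_middle_informative (X' x) with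
  | left h => mu' (exist _ x h)
  | right _ => zero
  end.

Definition inK {L : CRL} {X Y : Type} (phi : X -> Y -> L) (mu : X -> L) : Prop :=
  phiA phi (phiE phi mu) = mu.

(* Main.v *)
Require Import Defs.
From Stdlib Require Import Classical ClassicalEpsilon FunctionalExtensionality ProofIrrelevance.

Section S.
Variable L : CRL.

Lemma supf_ub {I} (f : I -> L) i : le (f i) (supf f).
Proof. apply sup_ub. exists i; reflexivity. Qed.
Lemma supf_least {I} (f : I -> L) b : (forall i, le (f i) b) -> le (supf f) b.
Proof. intros H; apply sup_least; intros a [i ->]; apply H. Qed.
Lemma inff_lb {I} (f : I -> L) i : le (inff f) (f i).
Proof. apply inf_lb. exists i; reflexivity. Qed.
Lemma inff_greatest {I} (f : I -> L) b : (forall i, le b (f i)) -> le b (inff f).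
Proof. intros H; apply inf_greatest; intros a [i ->]; apply H. Qed.

Lemma zero_mul (a : L) : mul zero a = zero.
Proof. apply le_antisym; [|apply zero_le]. apply res_adj. apply zero_le. Qed.

Definition lef {X} (f g : X -> L) := forall x, le (f x) (g x).
Lemma lef_antisym {X} (f g : X -> L) : lef f g -> lef g f -> f = g.
Proof. intros H1 H2; apply functional_extensionality; intro x; apply le_antisym; auto. Qed.
Lemma lef_refl {X} (f : X -> L) : lef f f.
Proof. intro; apply le_refl. Qed.
Lemma lef_trans {X} (f g h : X -> L) : lef f g -> lef g h -> lef f h.
Proof. intros H1 H2 x; eapply le_trans; eauto. Qed.

Variables X Y : Type.

Lemma galois (phi : X -> Y -> L) (mu : X -> L) (lam : Y -> L) :
  lef (phiE phi mu) lam <-> lef mu (phiA phi lam).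
Proof.
  split; intros H.
  - intro x. apply inff_greatest; intro y. apply res_adj.
    eapply le_trans; [|apply (H y)]. unfold phiE.
    apply (supf_ub (fun x => mul (mu x) (phi x y)) x).
  - intro y. apply supf_least; intro x. apply res_adj.
    eapply le_trans; [apply H|]. apply (inff_lb (fun y => res (phi x y) (lam y)) y).
Qed.

Lemma unitE (phi : X -> Y -> L) (mu : X -> L) : lef mu (phiA phi (phiE phi mu)).
Proof. apply galois, lef_refl. Qed.
Lemma counitE (phi : X -> Y -> L) (lam : Y -> L) : lef (phiE phi (phiA phi lam)) lam.
Proof. apply galois, lef_refl. Qed.
Lemma phiE_mono (phi : X -> Y -> L) (mu1 mu2 : X -> L) : lef mu1 mu2 -> lef (phiE phi mu1) (phiE phi mu2).
Proof. intros H. apply galois. eapply lef_trans; [apply H|apply unitE]. Qed.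
Lemma phiA_mono (phi : X -> Y -> L) (l1 l2 : Y -> L) : lef l1 l2 -> lef (phiA phi l1) (phiA phi l2).
Proof. intros H. apply galois. eapply lef_trans; [apply counitE|apply H]. Qed.
Lemma EAE (phi : X -> Y -> L) (mu : X -> L) : phiE phi (phiA phi (phiE phi mu)) = phiE phi mu.
Proof. apply lef_antisym; [apply counitE| apply phiE_mono, unitE]. Qed.
Lemma AEA (phi : X -> Y -> L) (lam : Y -> L) : phiA phi (phiE phi (phiA phi lam)) = phiA phi lam.
Proof. apply lef_antisym; [apply phiA_mono, counitE| apply unitE]. Qed.

Lemma ext_E (phi : X -> Y -> L) (X' : X -> Prop) (mu' : {x | X' x} -> L) :
  phiE phi (extZero mu') = phiE (restrCtx phi X') mu'.
Proof.
  apply lef_antisym; intro y; unfold phiE; apply supf_least.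
  - intro x. unfold extZero. destruct (excluded_middle_informative (X' x)) as [h|h].
    + apply (supf_ub (fun x0 : {x | X' x} => mul (mu' x0) (restrCtx phi X' x0 y)) (exist _ x h)).
    + rewrite zero_mul. apply zero_le.
  - intros [x hx].
    eapply le_trans; [|apply (supf_ub (fun x => mul (extZero mu' x) (phi x y)) x)].
    unfold extZero, restrCtx; simpl.
    destruct (excluded_middle_informative (X' x)) as [h|h].
    + rewrite (proof_irrelevance _ h hx). apply le_refl.
    + contradiction.
Qed.

Lemma restr_E (phi : X -> Y -> L) (X' : X -> Prop) (nu : X -> L) :
  lef (phiE (restrCtx phi X') (restrFun nu X')) (phiE phi nu).
Proof.
  intro y; unfold phiE; apply supf_least. intros [x hx].
  apply (supf_ub (fun x => mul (nu x) (phi x y)) x).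
Qed.

End S.

Theorem mainTheorem4 (L : CRL) (X Y : Type) (phi : X -> Y -> L) (X' : X -> Prop) :
  let phi' := restrCtx phi X' in
  let i := forall mu : X -> L, exists mu' : {x | X' x} -> L,
             phiE phi mu = phiE phi' mu' in
  let ii := forall mu : X -> L,
             phiE phi mu = phiE phi' (restrFun (phiA phi (phiE phi mu)) X') in
  let iii := (fun lam : Y -> L => phiE phi (phiA phi lam))
             = (fun lam : Y -> L => phiE phi' (phiA phi' lam)) in
  let iv := forall mu : X -> L, inK phi mu ->
             exists mu' : {x | X' x} -> L, inK phi' mu' /\
               phiA phi (phiE phi (extZero mu')) = mu in
  (i <-> ii) /\ (ii <-> iii) /\ (iii <-> iv).
Proof.
  intros phi' i ii iii iv.
  assert (HA : forall lam, phiA phi' lam = restrFun (phiA phi lam) X') by reflexivity.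
  assert (i_ii : i -> ii).
  { intros H mu. destruct (H mu) as [mu' E].
    apply lef_antisym.
    - rewrite E. apply phiE_mono. rewrite <- HA. apply unitE.
    - eapply lef_trans; [apply restr_E|]. rewrite EAE. apply lef_refl. }
  assert (ii_iii : ii -> iii).
  { intros H. apply functional_extensionality; intro lam.
    rewrite (H (phiA phi lam)), AEA, HA. reflexivity. }
  assert (iii_iv : iii -> iv).
  { intros H mu Hmu. exists (phiA phi' (phiE phi mu)). split.
    - unfold inK. apply AEA.
    - rewrite ext_E. fold phi'.
      pose proof (f_equal (fun F => F (phiE phi mu)) H) as H1. simpl in H1.
      rewrite <- H1. unfold inK in Hmu. rewrite Hmu. exact Hmu. }
  assert (iv_i : iv -> i).
  { intros H mu. destruct (H (phiA phi (phiE phi mu))) as [mu' [_ E]].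
    - unfold inK. apply AEA.
    - exists mu'. rewrite <- (EAE _ _ _ phi mu), <- E, EAE. apply ext_E. }
  assert (ii_i : ii -> i) by (intros H mu; eexists; apply H).
  repeat split; auto.
Qed.
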